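(* Let $\mathcal{C}[\cdot]$ be a certified admitted linear guarded one-hole context with hole type $\mathbb{B}_{M_Y}(Y)\to\mathbb{B}_{M_X}(X)$, with perturbation gain $L(\mathcal{C})<\infty$ and closed-context contraction modulus $\kappa(\mathcal{C})<1$. Let $\mathsf{M},\mathsf{N}$ be components whose transformers $\mathcal{T}_{\mathsf M},\mathcal{T}_{\mathsf N}:\mathbb{B}_{M_Y}(Y)\to\mathbb{B}_{M_X}(X)$ have this hole type, with all side components and certificates identical in the two circuits $\mathcal{C}[\mathsf M]$, $\mathcal{C}[\mathsf N]$, and assume the induced closed-loop operators $\mathcal{T}_{\mathcal{C}[\mathsf M]},\mathcal{T}_{\mathcal{C}[\mathsf N]}$ are self-maps of a common ball $\mathbb{B}_M(S)$ and are $\kappa(\mathcal{C})$-contractions there; let $V_{\mathcal{C}[\mathsf M]},V_{\mathcal{C}[\mathsf N]}$ be their unique fixed points. If $d_\infty^{X\leftarrow Y}(\mathcal{T}_{\mathsf M},\mathcal{T}_{\mathsf N})\le\varepsilon$, then \[\|V_{\mathcal{C}[\mathsf M]}-V_{\mathcal{C}[\mathsf N]}\|_\infty\le\frac{L(\mathcal{C})}{1-\kappa(\mathcal{C})}\,\varepsilon.\]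
   Context: For a measurable space $X$, $\mathcal{B}(X)$ is the space of bounded measurable real functions with sup norm and $\mathbb{B}_M(X):=\{V\in\mathcal{B}(X):\|V\|_\infty\le M\}$. For typed transformers $T,T':\mathbb{B}_{M_Y}(Y)\to\mathbb{B}_{M_X}(X)$, $d_\infty^{X\leftarrow Y}(T,T'):=\sup_{V\in\mathbb{B}_{M_Y}(Y)}\|TV-T'V\|_\infty$ (written $d_\infty^{(S,M)}$ when $X=Y=S$, $M_X=M_Y=M$). A linear one-hole context is a well-typed expression generated by $\mathcal{C}::=[\cdot]\mid T_0\circ\mathcal{C}\mid\mathcal{C}\circ T_0\mid\mathcal{C}\otimes T_0\mid T_0\otimes\mathcal{C}\mid\mathsf{Tr}^Z(\mathcal{D})$, where $T_0$ are fixed side transformers, $\otimes$ uses the product sup metric, $\mathsf{Tr}^Z$ is the guarded Banach trace (for $F=(F_Y,F_Z):X\times Z\to Y\times Z$ with $F_Z$ uniformly contractive in $z$, $\mathsf{Tr}^Z(F)(x)=F_Y(x,z_x)$ where $z_x=F_Z(x,z_x)$ is the unique fixed point), and the hole occurs exactly once (no copying, merging, or nonlinear inspection of the hole). It is certified/admitted if every subexpression carries invariant source/target balls, Lipschitz constants for side transformers, uniform guardedness constants at each trace node, and a finite perturbation gain $L(\mathcal{C})$ with the property that $d_\infty^{(S,M)}(\mathcal{T}_{\mathcal{C}[\mathsf M]},\mathcal{T}_{\mathcal{C}[\mathsf N]})\le L(\mathcal{C})\,d_\infty^{X\leftarrow Y}(\mathcal{T}_{\mathsf M},\mathcal{T}_{\mathsf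 N})$ for all compatible components $\mathsf M,\mathsf N$ with the hole type, and (for a closed context) a contraction modulus $\kappa(\mathcal{C})<1$ of the induced closed-loop operator on its invariant ball. *)

(* Defs.v *)
From HB Require Import structures.
From mathcomp Require Import all_boot all_order all_algebra.
From mathcomp Require Import all_classical all_reals.
From mathcomp Require Import all_analysis.
Set Implicit Arguments. Unset Strict Implicit. Unset Printing Implicit Defensive.
Import Order.TTheory GRing.Theory Num.Theory.
Local Open Scope classical_set_scope.
Local Open Scope ring_scope.

Section Defs.
Variable R : realType.

Definition bounded_meas d (X : measurableType d) (V : X -> R) : Prop :=
  measurable_fun setT V /\ exists C : R, forall x, `|V x| <= C.

Definition supnorm (X : Type) (V : X -> R) : R := sup [set `|V x| | x in setT].

Definition in_ball d (X : measurableType d) (M : R) (V : X -> R) : Prop :=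
  bounded_meas V /\ supnorm V <= M.

Definition transformer dX dY (X : measurableType dX) (Y : measurableType dY)
  (MY MX : R) (T : (Y -> R) -> (X -> R)) : Prop :=
  forall V, in_ball MY V -> in_ball MX (T V).

Definition dinf dX dY (X : measurableType dX) (Y : measurableType dY)
  (MY : R) (T T' : (Y -> R) -> (X -> R)) : R :=
  sup [set supnorm (T V \- T' V) | V in [set V | in_ball MY V]].

Definition contraction_on d (S : measurableType d) (M kappa : R)
  (F : (S -> R) -> (S -> R)) : Prop :=
  transformer M M F /\
  forall U V, in_ball M U -> in_ball M V ->
    supnorm (F U \- F V) <= kappa * supnorm (U \- V).

Definition fixed_point_in d (S : measurableType d) (M : R)
  (F : (S -> R) -> (S -> R)) (V : S -> R) : Prop :=
  in_ball M V /\ F V = V.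

(* Certification data of a closed linear one-hole context, abstracted as the
   plugging map [plug] sending a hole transformer T_M to the closed-loop
   operator T_{C[M]} on B_M(S), with finite perturbation gain L and
   contraction modulus kappa < 1. *)
Definition certified_context dX dY dS (X : measurableType dX)
  (Y : measurableType dY) (S : measurableType dS) (MY MX M L kappa : R)
  (plug : ((Y -> R) -> (X -> R)) -> ((S -> R) -> (S -> R))) : Prop :=
  0 <= L /\ 0 <= kappa /\ kappa < 1 /\
  forall T T', transformer MY MX T -> transformer MY MX T' ->
    dinf M (plug T) (plug T') <= L * dinf MY T T'.

End Defs.

(* Main.v *)
Require Import Defs.
From HB Require Import structures.
From mathcomp Require Import all_boot all_order all_algebra.
From mathcomp Require Import all_classical all_reals.
From mathcomp Require Import all_analysis.
From mathcomp Require Import ring lra.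
Import Order.TTheory GRing.Theory Num.Theory.
Local Open Scope classical_set_scope.
Local Open Scope ring_scope.

Set Implicit Arguments. Unset Strict Implicit.
Section Aux.
Variable R : realType.

Lemma sn_ub (T : Type) (f : T -> R) :
  (exists C, forall x, `|f x| <= C) -> forall x, `|f x| <= supnorm f.
Proof.
move=> [C HC] x; rewrite /supnorm.
apply: ub_le_sup; last by exists x.
by exists C => _ [y _ <-].
Qed.

Lemma sn_le (T : Type) (f : T -> R) C :
  (forall x, `|f x| <= C) -> 0 <= C -> supnorm f <= C.
Proof.
move=> HC C0; rewrite /supnorm.
have [->|ne] := eqVneq [set `|f x| | x in [set: T]] set0.
  by rewrite sup0.
apply: ge_sup; first by apply/set0P.
by move=> _ [y _ <-].
Qed.

Lemma sn_ge0 (T : Type) (f : T -> R) :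
  (exists C, forall x, `|f x| <= C) -> 0 <= supnorm f.
Proof.
move=> hb; rewrite /supnorm.
have [->|ne] := eqVneq [set `|f x| | x in [set: T]] set0.
  by rewrite sup0.
have /set0P [y [x _ xe]] := ne.
exact: (le_trans (normr_ge0 (f x)) (sn_ub hb x)).
Qed.

Lemma sn_tri (T : Type) (f g h : T -> R) :
  (exists C, forall x, `|f x| <= C) -> (exists C, forall x, `|g x| <= C) ->
  (forall x, `|h x| <= `|f x| + `|g x|) -> supnorm h <= supnorm f + supnorm g.
Proof.
move=> hf hg hh; apply: sn_le; last by rewrite addr_ge0 // sn_ge0.
move=> x; apply: le_trans (hh x) _; apply: lerD; exact: sn_ub.
Qed.

Lemma ball_bnd d (X : measurableType d) M (V : X -> R) :
  in_ball M V -> exists C, forall x, `|V x| <= C.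
Proof. by case=> [[_ h] _]. Qed.

Lemma ball_bndM d (X : measurableType d) M (V : X -> R) :
  in_ball M V -> forall x, `|V x| <= M.
Proof.
move=> hV x; apply: le_trans (sn_ub (ball_bnd hV) x) _; exact: hV.2.
Qed.

End Aux.

Theorem theorem5 (R : realType) (dX dY dS : measure_display)
  (X : measurableType dX) (Y : measurableType dY) (S : measurableType dS)
  (MY MX M L kappa eps : R)
  (plug : ((Y -> R) -> (X -> R)) -> ((S -> R) -> (S -> R)))
  (TM TN : (Y -> R) -> (X -> R)) (VM VN : S -> R) :
  certified_context MY MX M L kappa plug ->
  transformer MY MX TM -> transformer MY MX TN ->
  contraction_on M kappa (plug TM) -> contraction_on M kappa (plug TN) ->
  fixed_point_in M (plug TM) VM -> fixed_point_in M (plug TN) VN ->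
  dinf MY TM TN <= eps ->
  supnorm (VM \- VN) <= L / (1 - kappa) * eps.
Proof.
move=> [L0 [k0 [k1 Hc]]] tM tN [cM _] [cN HN] [bM fM] [bN fN] He.
have bTNM := cN _ bM.
have bTMM := cM _ bM.
set a := plug TM VM \- plug TN VM.
set b := plug TN VM \- plug TN VN.
have ha : supnorm a <= L * eps.
  apply: le_trans (_ : dinf M (plug TM) (plug TN) <= _).
    rewrite /dinf; apply: ub_le_sup; last by exists VM.
    exists (M + M) => _ [V hV <-].
    have h1 := cM _ hV; have h2 := cN _ hV.
    apply: le_trans (sn_tri (ball_bnd h1) (ball_bnd h2) _) _.
      by move=> x; rewrite /= ler_normB.
    by apply: lerD; [exact: h1.2 | exact: h2.2].
  apply: le_trans (Hc _ _ tM tN) _; exact: ler_wpM2l.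
have hb : supnorm b <= kappa * supnorm (VM \- VN) by exact: HN.
have bd : forall (f g : S -> R), (exists C, forall x, `|f x| <= C) ->
    (exists C, forall x, `|g x| <= C) -> exists C, forall x, `|(f \- g) x| <= C.
  move=> f g [C1 h1] [C2 h2]; exists (C1 + C2) => x.
  by apply: le_trans (ler_normB _ _) _; apply: lerD.
have hs : supnorm (VM \- VN) <= supnorm a + supnorm b.
  apply: sn_tri; [exact: bd (ball_bnd bTMM) (ball_bnd bTNM)
                 | exact: bd (ball_bnd bTNM) (ball_bnd (cN _ bN)) |].
  move=> x; rewrite /a /b /= fM.
  have -> : VM x - VN x = (VM x - plug TN VM x) + (plug TN VM x - VN x) by ring.
  rewrite fN; exact: ler_normD.
have k1' : 0 < 1 - kappa by rewrite subr_gt0.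
have := le_trans hs (lerD ha hb).
move: (supnorm (VM \- VN)) => s0 hs0.
rewrite mulrAC ler_pdivlMr //.
have e : s0 * (1 - kappa) = s0 - kappa * s0 by rewrite mulrBr mulr1 mulrC.
rewrite e lerBlDr.
exact: hs0.
Qed.
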